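(* Let $q$ be a prime power with $q\equiv 1\pmod 3$ and $q\geq 7$. If $q$ is odd, then $M(q-1,q-3)\geq (q^2-1)/2$. If $q$ is even, then $M(q-1,q-3)\geq (q-1)(q+2)/3$.
   Context: For permutations $\pi,\sigma$ of a finite set, $hd(\pi,\sigma)$ is the number of points at which they differ. $M(n,d)$ denotes the maximum number of permutations in a set $A$ of permutations of an $n$-element set such that $hd(\pi,\sigma)\geq d$ for all distinct $\pi,\sigma\in A$. *)

(* Defs.v *)
From mathcomp Require Import all_boot all_order all_fingroup.
Set Implicit Arguments. Unset Strict Implicit. Unset Printing Implicit Defensive.

Definition hd (T : finType) (pi sigma : {perm T}) : nat :=
  #|[set x : T | pi x != sigma x]|.

Definition perm_code (n d : nat) (A : {set {perm 'I_n}}) : bool :=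
  [forall pi in A, forall sigma in A, (pi != sigma) ==> (d <= hd pi sigma)].

Definition M (n d : nat) : nat :=
  \max_(A : {set {perm 'I_n}} | perm_code d A) #|A|.

Definition prime_power (q : nat) : Prop :=
  exists p k, prime p /\ 0 < k /\ q = p ^ k.

(* Main.v *)
Require Import Defs.
From mathcomp Require Import all_boot all_order all_fingroup ssralg finalg finfield.
From mathcomp Require Import ring zify.

Set Implicit Arguments. Unset Strict Implicit. Unset Printing Implicit Defensive.
Import GRing.Theory.
Local Open Scope ring_scope.

Lemma card_le2 (U : finType) (X : {set U}) :
  (forall x y z, x \in X -> y \in X -> z \in X -> x != y -> x != z -> y != z -> False) ->
  (#|X| <= 2)%N.
Proof.
move=> H3; rewrite leqNgt; apply/negP => H.
have /card_gt0P[x xX] : (0 < #|X|)%N by apply: leq_ltn_trans H.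
have /card_gt0P[y yX] : (0 < #|X :\ x|)%N by move: H; rewrite (cardsD1 x X) xX /=; lia.
have /card_gt0P[z zX] : (0 < #|X :\ x :\ y|)%N.
  by move: H; rewrite (cardsD1 x X) xX (cardsD1 y (X :\ x)) yX /=; lia.
move: zX yX; rewrite !in_setD1 => /and3P[zy zx zX] /andP[yx yX].
by apply: (H3 x y z xX yX zX); rewrite eq_sym.
Qed.

Lemma greedy (U : finType) (c : rel U) :
  (forall x y, c x y -> c y x) -> (forall x, #|[set y | c x y]| <= 2)%N ->
  forall V : {set U}, exists I : {set U},
    [/\ I \subset V, (forall x y, x \in I -> y \in I -> x != y -> ~~ c x y) &
        (#|V| <= 3 * #|I|)%N].
Proof.
move=> cs cd V; move: {2}#|V| (leqnn #|V|) => n; elim: n V => [|n IH] V HV.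
  exists set0; split; rewrite ?sub0set //; first by move=> x y; rewrite inE.
  by rewrite cards0 muln0.
case: (eqVneq V set0) => [->|/set0Pn[x xV]].
  exists set0; split; rewrite ?sub0set //; first by move=> ? ?; rewrite inE.
  by rewrite !cards0.
set N := [set y | c x y].
set V' := V :\: (x |: N).
have sV' : V' \subset V :\ x.
  apply/subsetP=> y; rewrite /V' !inE negb_or => /andP[/andP[-> _] ->] //.
have cV' : (#|V'| <= n)%N.
  have := subset_leq_card sV'; move: HV; rewrite (cardsD1 x V) xV /=; lia.
have [I' [sI' indI' cI']] := IH V' cV'.
have xI' : x \notin I'.
  apply/negP => /(subsetP sI'); by rewrite /V' /N !inE eqxx.
exists (x |: I'); split.
- apply/subsetP=> y; rewrite !inE => /orP[/eqP->//|/(subsetP sI')].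
  by rewrite /V' !inE => /andP[_ ->].
- have nI y : y \in I' -> ~~ c x y.
    by move/(subsetP sI'); rewrite /V' /N !inE negb_or => /andP[/andP[_ /negP ?] _]; apply/negP.
  move=> y z; rewrite !inE => /orP[/eqP->|yI] /orP[/eqP->|zI].
  + by rewrite eqxx.
  + by move=> _; apply: nI.
  + by move=> _; apply/negP => /cs; apply/negP; apply: nI.
  + exact: indI'.
- rewrite cardsU1 xI' /=.
  have sV : V \subset V' :|: (x |: N).
    apply/subsetP=> y yV; rewrite /V' /N !inE yV andbT; by case: (y == x); case: (c x y).
  have h1 := subset_leq_card sV.
  have h2 := (leq_card_setU V' (x |: N)).1.
  have h3 : (#|x |: N| <= 3)%N by rewrite cardsU1; have := cd x; rewrite -/N; case: (x \notin N) => /=; lia.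
  move: h1 h2 h3 cI'; lia.
Qed.

Lemma transfer (U : finType) n d (A : {set {perm U}}) : #|U| = n ->
  (forall p s, p \in A -> s \in A -> p != s -> (d <= hd p s)%N) ->
  (#|A| <= M n d)%N.
Proof.
move=> HU Hd.
pose e (x : U) : 'I_n := cast_ord HU (enum_rank x).
pose ei (i : 'I_n) : U := enum_val (cast_ord (esym HU) i).
have eK : cancel e ei by move=> x; rewrite /e /ei cast_ordK enum_rankK.
have eiK : cancel ei e by move=> i; rewrite /e /ei enum_valK cast_ordKV.
have e_inj := can_inj eK.
have cinj (p : {perm U}) : injective (fun i => e (p (ei i))).
  move=> i j /e_inj /perm_inj /(can_inj eiK) //.
pose cj (p : {perm U}) : {perm 'I_n} := perm (cinj p).
have cjE p x : cj p (e x) = e (p x) by rewrite permE /= eK.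
have cj_inj : injective cj.
  move=> p s eq; apply/permP => x; apply: e_inj; by rewrite -!cjE eq.
have hdE p s : hd (cj p) (cj s) = hd p s.
  rewrite /hd.
  have -> : [set i | cj p i != cj s i] = ei @^-1: [set x | p x != s x].
    by apply/setP => i; rewrite !inE !permE /= (inj_eq e_inj).
  apply: on_card_preimset; apply: onW_bij; exact: (Bijective eiK eK).
have -> : #|A| = #|cj @: A| by rewrite card_imset.
apply: (@leq_bigmax_cond _ (fun B : {set {perm 'I_n}} => perm_code d B) (fun B => #|B|)).
apply/forallP => p'; apply/implyP => /imsetP[p pA ->].
apply/forallP => s'; apply/implyP => /imsetP[s sA ->].
apply/implyP => ne; rewrite hdE; apply: Hd => //.
by apply: contraNneq ne => ->.
Qed.


Section Constr.
Variable F : finFieldType.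
Definition T := {x : F | x != 0}.

Definition gv (a : T) (b : F) (x : T) : F :=
  if val a * val x + b == 0 then b else val a * val x + b.

Lemma gv_neq0 a b x : gv a b x != 0.
Proof.
rewrite /gv; case: ifP => [/eqP H|/negbT //].
apply/eqP=> b0; move: H; rewrite b0 addr0 => /eqP.
by rewrite mulf_eq0 (negbTE (valP a)) (negbTE (valP x)).
Qed.

Definition gf a b x : T := exist _ (gv a b x) (gv_neq0 a b x).

Lemma gf_inj a b : injective (gf a b).
Proof.
move=> x y /(congr1 val) /=; rewrite /gv.
have a0 : val a != 0 := valP a.
have x0 : val x != 0 := valP x.
have y0 : val y != 0 := valP y.
case: ifP => [/eqP Hx|/negbT Hx]; case: ifP => [/eqP Hy|/negbT Hy].
- move=> _; apply: val_inj; apply: (mulfI a0); apply: (addIr b); by rewrite Hx Hy.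
- move=> H; exfalso; have /eqP : val a * val y = 0 by apply: (addIr b); rewrite -H add0r.
  by rewrite mulf_eq0 (negbTE a0) (negbTE y0).
- move=> H; exfalso; have /eqP : val a * val x = 0 by apply: (addIr b); rewrite H add0r.
  by rewrite mulf_eq0 (negbTE a0) (negbTE x0).
- move=> /addIr /(mulfI a0) H; exact: val_inj.
Qed.

Definition pg (P : T * F) : {perm T} := perm (@gf_inj P.1 P.2).

Definition conf (P Q : T * F) : bool :=
  [&& P.2 != 0,
      (val P.1)^+2 + val P.1 * val Q.1 + (val Q.1)^+2 == 0 &
      val P.1 * P.2 + val Q.1 * Q.2 == 0].

Lemma agree_le2 P Q : P != Q -> ~~ conf P Q ->
  (#|[set x | pg P x == pg Q x]| <= 2)%N.
Proof.
case: P Q => a1 b1 [a2 b2] PQ nc.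
set E := [set x | _].
have a10 : val a1 != 0 := valP a1.
have a20 : val a2 != 0 := valP a2.
set E1 := [set x in E | val a1 * val x + b1 == 0].
set E2 := [set x in E | val a2 * val x + b2 == 0].
set N := [set x in E | (val a1 * val x + b1 != 0) && (val a2 * val x + b2 != 0)].
have HE x : (pg (a1, b1) x == pg (a2, b2) x) = (gv a1 b1 x == gv a2 b2 x).
  by rewrite !permE.
have sub : E \subset E1 :|: E2 :|: N.
  apply/subsetP=> x; rewrite !inE => ->.
  by case: (val a1 * val x + b1 == 0); case: (val a2 * val x + b2 == 0).
have cE : #|E| <= #|E1| + #|E2| + #|N|.
  apply: leq_trans (subset_leq_card sub) _.
  apply: leq_trans (leq_card_setU _ _) _.
  by rewrite leq_add2r leq_card_setU.
have NE : #|N| <= 1.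
  apply/card_le1_eqP=> x y; rewrite !inE !HE /gv.
  case/and3P=> Hx n1 n2; rewrite (negbTE n1) (negbTE n2) in Hx.
  case/and3P=> Hy m1 m2; rewrite (negbTE m1) (negbTE m2) in Hy.
  move/eqP: Hx => Hx; move/eqP: Hy => Hy; apply/esym.
  have [ea|nea] := eqVneq (val a1) (val a2).
    exfalso; move: PQ; rewrite xpair_eqE.
    have eb : b1 = b2 by move: Hx; rewrite ea => /addrI.
    by rewrite eb (val_inj ea) !eqxx.
  have : (val a1 - val a2) * (val x - val y) = 0.
    have -> : (val a1 - val a2) * (val x - val y) =
      (val a1 * val x + b1 - (val a2 * val x + b2)) - (val a1 * val y + b1 - (val a2 * val y + b2)) by ring.
    by rewrite Hx Hy !subrr.
  move/eqP; rewrite mulf_eq0 subr_eq0 (negbTE nea) /= subr_eq0 => /eqP; exact: val_inj.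
have E1E : #|E1| <= 1.
  apply/card_le1_eqP=> x y; rewrite !inE.
  case/andP=> _ /eqP Hx /andP[_ /eqP Hy].
  apply: val_inj; apply: (mulfI a10); apply: (addIr b1); by rewrite Hx Hy.
have E2E : #|E2| <= 1.
  apply/card_le1_eqP=> x y; rewrite !inE.
  case/andP=> _ /eqP Hx /andP[_ /eqP Hy].
  apply: val_inj; apply: (mulfI a20); apply: (addIr b2); by rewrite Hx Hy.
suff : (E1 == set0) || (E2 == set0).
  case/orP=> /eqP e0; move: cE; rewrite e0 cards0 ?addn0 => cE;
  apply: leq_trans cE _.
    by rewrite -(leq_add2l 0) /= ; apply: (leq_add E2E NE).
  by apply: (leq_add E1E NE).
case: (eqVneq E1 set0) => [//|/set0Pn[x1]]; case: (eqVneq E2 set0) => [//|/set0Pn[x2]].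
move=> x2E x1E; move: x1E x2E; rewrite !inE !HE /gv => /andP[e1 h1] /andP[e2 h2].
rewrite h1 in e1; rewrite h2 in e2.
have x10 : val x1 != 0 := valP x1.
have x20 : val x2 != 0 := valP x2.
move/eqP: h1 => h1; move/eqP: h2 => h2.
move: e1; case: ifP => [/eqP h12 /eqP eb|_ /eqP h3].
  exfalso; move: PQ; rewrite xpair_eqE eb eqxx andbT; apply/negP/negPn/eqP/val_inj.
  apply: (mulIf x10); apply: (addIr b2); by rewrite h12 -eb h1.
move: e2; case: ifP => [/eqP h21 /eqP eb|_ /eqP h4].
  exfalso; move: PQ; rewrite xpair_eqE -eb eqxx andbT; apply/negP/negPn/eqP/val_inj.
  apply: (mulIf x20); apply: (addIr b1); by rewrite h21 eb h2.
exfalso; move/negP: nc; apply.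
set A1 := val a1 in a10 h1 h2 h3 h4 *; set A2 := val a2 in a20 h1 h2 h3 h4 *.
set X1 := val x1 in x10 h1 h2 h3 h4 *; set X2 := val x2 in x20 h1 h2 h3 h4 *.
have E3 : A2 * X2 - (A1 + A2) * X1 = 0.
  have -> : A2 * X2 - (A1 + A2) * X1 = (A2 * X2 + b2) - (A1 * X1 + b1) + (b1 - (A2 * X1 + b2)) by ring.
  by rewrite h1 h2 h3 !subrr addr0.
have E4 : (A1 + A2) * X2 - A1 * X1 = 0.
  have -> : (A1 + A2) * X2 - A1 * X1 = (A2 * X2 + b2) - (A1 * X1 + b1) + ((A1 * X2 + b1) - b2) by ring.
  by rewrite h1 h2 -h4 !subrr addr0.
have Qz : A1 ^+ 2 + A1 * A2 + A2 ^+ 2 = 0.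
  have : X1 * X2 * (A1 ^+ 2 + A1 * A2 + A2 ^+ 2) = 0.
    have -> : X1 * X2 * (A1 ^+ 2 + A1 * A2 + A2 ^+ 2) =
      ((A1 + A2) * X1) * ((A1 + A2) * X2 - A1 * X1) - (A2 * X2 - (A1 + A2) * X1) * ((A1 + A2) * X2)
      + (A2 * X2 - (A1 + A2) * X1) * ((A1 + A2) * X2 - A1 * X1) by ring.
    by rewrite E3 E4 !mulr0 !mul0r subrr addr0.
  by move/eqP; rewrite !mulf_eq0 (negbTE x10) (negbTE x20) /= => /eqP.
rewrite /conf /= Qz eqxx /=; apply/andP; split.
  apply/eqP=> b0; move/eqP: h1; rewrite b0 addr0 mulf_eq0 (negbTE a10) (negbTE x10) //.
have -> : A1 * b1 + A2 * b2 = A1 * (A1 * X1 + b1) + A2 * (A2 * X2 + b2)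
   - A2 * (A2 * X2 - (A1 + A2) * X1) - X1 * (A1 ^+ 2 + A1 * A2 + A2 ^+ 2) by ring.
by rewrite h1 h2 E3 Qz !mulr0 !subr0 addr0.
Qed.

Lemma card_T : #|{: T}| = (#|F|).-1.
Proof. by rewrite card_sig; exact: cardC1. Qed.

Lemma hd_pg P Q : P != Q -> ~~ conf P Q -> ((#|F|).-1 - 2 <= hd (pg P) (pg Q))%N.
Proof.
move=> PQ nc; have H := agree_le2 PQ nc.
have -> : hd (pg P) (pg Q) = #|~: [set x | pg P x == pg Q x]|.
  by rewrite /hd; apply: eq_card => x; rewrite !inE.
have := cardsC [set x | pg P x == pg Q x]; rewrite card_T => <-.
move: H; set e := #|[set x | _]|; set f := #|~: _|; lia.
Qed.

Lemma conf_sym P Q : conf P Q -> conf Q P.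
Proof.
case: P Q => a1 b1 [a2 b2]; rewrite /conf /= => /and3P[b10 /eqP q /eqP s].
have a10 : val a1 != 0 := valP a1.
have a20 : val a2 != 0 := valP a2.
apply/and3P; split.
- apply/eqP=> b20; move: s; rewrite b20 mulr0 addr0 => /eqP.
  by rewrite mulf_eq0 (negbTE a10) (negbTE b10).
- apply/eqP; move: (val a1) (val a2) q => x y q; transitivity (x^+2 + x * y + y^+2); [ring | exact: q].
- by rewrite addrC s.
Qed.


Lemma quad3 (a r s t : F) : a ^+ 2 + a * r + r ^+ 2 = 0 -> a ^+ 2 + a * s + s ^+ 2 = 0 ->
  a ^+ 2 + a * t + t ^+ 2 = 0 -> r != s -> r != t -> s != t -> False.
Proof.
move=> hr hs ht rs rt st.
have k x y : a ^+ 2 + a * x + x ^+ 2 = 0 -> a ^+ 2 + a * y + y ^+ 2 = 0 -> x != y -> x + y + a = 0.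
  move=> hx hy xy; have : (x - y) * (x + y + a) = 0.
    have -> : (x - y) * (x + y + a) = (a ^+ 2 + a * x + x ^+ 2) - (a ^+ 2 + a * y + y ^+ 2) by ring.
    by rewrite hx hy subrr.
  by move/eqP; rewrite mulf_eq0 subr_eq0 (negbTE xy) /= => /eqP.
have e1 := k _ _ hr hs rs; have e2 := k _ _ hr ht rt.
move/negP: st; apply; apply/eqP.
have : r + s + a - (r + t + a) = 0 by rewrite e1 e2 subrr.
have -> : r + s + a - (r + t + a) = s - t by ring.
by move/eqP; rewrite subr_eq0 => /eqP.
Qed.

Lemma conf_deg P : (#|[set Q | conf P Q]| <= 2)%N.
Proof.
case: P => a1 b1.
have a10 : val a1 != 0 := valP a1.
have H Q : conf (a1, b1) Q -> (val a1)^+2 + val a1 * val Q.1 + (val Q.1)^+2 = 0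
   /\ val a1 * b1 + val Q.1 * Q.2 = 0.
  by rewrite /conf /= => /and3P[_ /eqP ? /eqP ?].
have inj Q Q' : conf (a1, b1) Q -> conf (a1, b1) Q' -> val Q.1 = val Q'.1 -> Q = Q'.
  case: Q Q' => c d [c' d'] /H[_ h1] /H[_ h2] /= e.
  have e1 : c = c' := val_inj e.
  have c0 : val c != 0 := valP c.
  rewrite -e1; congr (_, _); apply: (mulfI c0); apply: (addrI (val a1 * b1)).
  by rewrite h1 e1 h2.
apply: card_le2 => Q1 Q2 Q3; rewrite !inE => c1 c2 c3 n12 n13 n23.
have d Q Q' : conf (a1, b1) Q -> conf (a1, b1) Q' -> Q != Q' -> val Q.1 != val Q'.1.
  by move=> cQ cQ' nQ; apply/eqP => e; move/negP: nQ; apply; apply/eqP; apply: inj.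
apply: (quad3 (H _ c1).1 (H _ c2).1 (H _ c3).1); exact: d.
Qed.

Lemma code_bound (Sel : {set T * F}) : (4 <= #|F|)%N ->
  (forall P Q, P \in Sel -> Q \in Sel -> P != Q -> ~~ conf P Q) ->
  (#|Sel| <= M (#|F|).-1 ((#|F|).-1 - 2))%N.
Proof.
move=> q4 H.
have dist P Q : P \in Sel -> Q \in Sel -> P != Q -> ((#|F|).-1 - 2 <= hd (pg P) (pg Q))%N.
  by move=> PS QS PQ; apply: hd_pg => //; apply: H.
have -> : #|Sel| = #|pg @: Sel|.
  rewrite card_in_imset // => P Q PS QS e; apply/eqP; apply: contraT => PQ.
  have := dist P Q PS QS PQ; rewrite e.
  have -> : hd (pg Q) (pg Q) = 0%N by rewrite /hd; apply: eq_card0 => x; rewrite !inE eqxx.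
  by move: q4; rewrite leqn0 subn_eq0; lia.
apply: transfer; first exact: card_T.
move=> p s /imsetP[P PS ->] /imsetP[Q QS ->] ne; apply: dist => //.
by apply: contraNneq ne => ->.
Qed.

Lemma card_Z : #|[set P : T * F | P.2 == 0]| = (#|F|).-1.
Proof.
have -> : [set P : T * F | P.2 == 0] = setX [set: T] [set 0].
  by apply/setP => -[a b]; rewrite !inE.
by rewrite cardsX cardsT cards1 muln1 card_T.
Qed.

Lemma card_NZ : #|[set P : T * F | P.2 != 0]| = ((#|F|).-1 * (#|F|).-1)%N.
Proof.
have -> : [set P : T * F | P.2 != 0] = setX [set: T] [set~ 0].
  by apply/setP => -[a b]; rewrite !inE.
by rewrite cardsX cardsT cardsC1 card_T.
Qed.

Lemma even_case : (4 <= #|F|)%N ->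
  (((#|F|).-1 * (#|F|).-1 + 3 * (#|F|).-1) <= 3 * M (#|F|).-1 ((#|F|).-1 - 2))%N.
Proof.
move=> q4.
have [I [sI indI cI]] := greedy conf_sym conf_deg [set P : T * F | P.2 != 0].
set Z := [set P : T * F | P.2 == 0].
have := @code_bound (Z :|: I) q4.
have dZI : Z :&: I = set0.
  apply/setP => P; rewrite !inE; apply/negP => /andP[/eqP z /(subsetP sI)].
  by rewrite inE z eqxx.
have cS : #|Z :|: I| = (#|Z| + #|I|)%N by rewrite -cardsUI dZI cards0 addn0.
move=> H.
have : (#|Z :|: I| <= M (#|F|).-1 ((#|F|).-1 - 2))%N.
  apply: H => P Q; rewrite !inE => /orP[zP|iP] /orP[zQ|iQ] PQ.
  - by rewrite /conf; move/eqP: zP => ->; rewrite eqxx.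
  - by rewrite /conf; move/eqP: zP => ->; rewrite eqxx.
  - apply/negP => /conf_sym; rewrite /conf; move/eqP: zQ => ->; by rewrite eqxx.
  - exact: indI.
rewrite cS card_Z; move: cI; rewrite card_NZ; lia.
Qed.

Lemma odd_case : (4 <= #|F|)%N -> (2 : F) != 0 ->
  ((#|F|).-1 * #|F| + (#|F|).-1 <= 2 * M (#|F|).-1 ((#|F|).-1 - 2))%N.
Proof.
move=> q4 two0.
set S := [set c : F | (enum_rank c < enum_rank (- c))%N].
set Sel := [set P : T * F | (P.2 == 0) || (val P.1 * P.2 \in S)].
set Sel2 := [set P : T * F | (P.2 == 0) || (- (val P.1 * P.2) \in S)].
pose f (P : T * F) := (P.1, - P.2).
have finj : injective f by move=> [a b] [a' b'] [-> /oppr_inj ->].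
have e2 : Sel2 = f @^-1: Sel.
  by apply/setP => -[a b]; rewrite !inE /= oppr_eq0 mulrN.
have c2 : #|Sel2| = #|Sel| by rewrite e2 card_preimset.
have neg (c : F) : c != 0 -> c != - c.
  move=> c0; apply/eqP => e; move/negP: c0; apply; apply/eqP.
  have : c *+ 2 = 0 by rewrite mulr2n {1}e addNr.
  by move/eqP; rewrite -(mulr_natr c 2) mulf_eq0 (negbTE two0) orbF => /eqP.
have U : Sel :|: Sel2 = setT.
  apply/setP => -[a b]; rewrite !inE /=; case: eqP => //= /eqP b0.
  have c0 : val a * b != 0 by rewrite mulf_neq0 // (valP a).
  have := neg _ c0; rewrite opprK.
  case: (ltngtP (enum_rank (val a * b)) (enum_rank (- (val a * b)))) => //.
  by move=> /val_inj/enum_rank_inj e; rewrite {1}e eqxx.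
have I : Sel :&: Sel2 = [set P : T * F | P.2 == 0].
  apply/setP => -[a b]; rewrite !inE /=; case: eqP => //= _; rewrite opprK.
  by apply/negP => /andP[h1 h2]; have := ltn_trans h1 h2; rewrite ltnn.
have := cardsUI Sel Sel2; rewrite U I cardsT card_prod card_T card_Z c2 => E.
have : (#|Sel| <= M (#|F|).-1 ((#|F|).-1 - 2))%N.
  apply: code_bound => // -[a1 b1] [a2 b2]; rewrite !inE /= => h1 h2 PQ.
  apply/negP; rewrite /conf /= => /and3P[b10 _ /eqP s].
  rewrite (negbTE b10) /= in h1.
  have e : val a2 * b2 = - (val a1 * b1) by apply/eqP; rewrite -addr_eq0 addrC s.
  have b20 : b2 != 0.
    apply/eqP => b20; move: e; rewrite b20 mulr0 => /eqP; rewrite eq_sym oppr_eq0.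
    by rewrite mulf_eq0 (negbTE b10) orbF (negbTE (valP a1)).
  rewrite (negbTE b20) /= e opprK in h2.
  by have := ltn_trans h1 h2; rewrite ltnn.
move=> HS; rewrite E mul2n -addnn; by apply: leq_add.
Qed.
End Constr.




Local Close Scope ring_scope.

Theorem corollary7 (q : nat) :
  prime_power q -> q %% 3 = 1 -> 7 <= q ->
  (odd q -> (q ^ 2 - 1) %/ 2 <= M (q - 1) (q - 3)) /\
  (~~ odd q -> ((q - 1) * (q + 2)) %/ 3 <= M (q - 1) (q - 3)).
Proof.
move=> [p [k [pp [k0 eq]]]] _ q7.
have [F pF cF] := pPrimePowerField pp k0.
rewrite -eq in cF.
have q4 : 4 <= #|F| by rewrite cF; lia.
have e1 : q - 1 = #|F|.-1 by rewrite cF subn1.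
have e3 : q - 3 = #|F|.-1 - 2 by rewrite cF; lia.
rewrite e1 e3; split.
- move=> oq.
  have two0 : (2%:R : F)%R != 0%R.
    apply/negP => t; have : p %| 2 by rewrite (dvdn_pcharf pF).
    rewrite dvdn_prime2 // => /eqP p2; move: oq; rewrite eq p2 oddX /=.
    by case: k k0 {eq} => [|?].
  have := odd_case q4 two0; rewrite -e1 cF => H.
  have E : q ^ 2 - 1 = (q - 1) * q + (q - 1) by nia.
  rewrite E; lia.
- move=> _; have := even_case q4; rewrite -e1 => H.
  have E : (q - 1) * (q + 2) = (q - 1) * (q - 1) + 3 * (q - 1) by nia.
  rewrite E; lia.
Qed.
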